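(* Let $\mathcal{G}=(\mathcal{V},\mathcal{E},\mathcal{W})$ be an undirected weighted graph, let $\mathcal{E}_-$ be the set of negative-weight edges and $\mathcal{E}_+$ the set of positive-weight edges, with $|\mathcal{E}_-|>1$, and assume $\mathcal{G}_+=(\mathcal{V},\mathcal{E}_+)$ (with its weights) is connected. For each $k=(u_k,v_k)\in\mathcal{E}_-$ let $P_k\subseteq\mathcal{E}_+$ be the set of edges $e\in\mathcal{E}_+$ for which there exists a path in $\mathcal{G}_+$ from $u_k$ to $v_k$ using $e$, and assume $P_i\cap P_j=\emptyset$ for all distinct $i,j\in\mathcal{E}_-$. Let $\mathcal{R}_k(\mathcal{G}_+)=\mathcal{R}_{u_kv_k}(\mathcal{G}_+)$. Then $L(\mathcal{G})$ is positive semi-definite if and only if $|\mathcal{W}(k)|\le \mathcal{R}_k(\mathcal{G}_+)^{-1}$ for every $k\in\mathcal{E}_-$ (i.e. $|W_-|\le \mathbf{R}^{-1}$ with $W_-$ the diagonal matrix of negative weights and $\mathbf{R}=\mathrm{diag}(\mathcal{R}_k(\mathcal{G}_+))_{k\in\mathcal{E}_-}$).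
   Context: Weights $\mathcal{W}:\mathcal{E}\to\mathbb{R}\setminus\{0\}$; with an arbitrary edge orientation the incidence matrix $E$ has in the column of edge $(i,j)$ entry $+1$ in row $i$, $-1$ in row $j$, $0$ elsewhere; $L(\mathcal{G})=EWE^T$ with $W$ the diagonal weight matrix. Paths are simple paths. For a weighted graph $\mathcal{H}$ on $\mathcal{V}$, the effective resistance between $u,v$ is $\mathcal{R}_{uv}(\mathcal{H})=(\mathbf{e}_u-\mathbf{e}_v)^TL^{\dagger}(\mathcal{H})(\mathbf{e}_u-\mathbf{e}_v)$, with $L^{\dagger}$ the Moore–Penrose pseudo-inverse and $\mathbf{e}_u$ the standard basis vector of node $u$. *)

(* Defs.v *)
From HB Require Import structures.
From mathcomp Require Import all_boot all_order all_algebra.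
From Stdlib Require Import ClassicalEpsilon.
Set Implicit Arguments. Unset Strict Implicit. Unset Printing Implicit Defensive.
Import Order.TTheory GRing.Theory Num.Theory.
Local Open Scope ring_scope.

(* A weighted graph with vertex set 'I_n and edge set 'I_m; edge e joins
   src e and dst e (the arbitrary orientation of e), and has weight w e. *)

Definition edge_is (n m : nat) (src dst : 'I_m -> 'I_n) (e : 'I_m) (x y : 'I_n) : bool :=
  ((src e == x) && (dst e == y)) || ((src e == y) && (dst e == x)).

Definition incidence (n m : nat) (R : pzRingType) (src dst : 'I_m -> 'I_n) : 'M[R]_(n, m) :=
  \matrix_(i, e) ((i == src e)%:R - (i == dst e)%:R).

Definition laplacian (R : pzRingType) (n m : nat) (src dst : 'I_m -> 'I_n) (w : 'I_m -> R)
  : 'M[R]_n :=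
  incidence R src dst *m diag_mx (\row_e w e) *m (incidence R src dst)^T.

(* Weights of the positive subgraph G_+ (negative edges removed). *)
Definition pos_part (R : realFieldType) (m : nat) (w : 'I_m -> R) : 'I_m -> R :=
  fun e => if 0 < w e then w e else 0.

Definition penrose (R : realFieldType) (n : nat) (A X : 'M[R]_n) : Prop :=
  [/\ A *m X *m A = A, X *m A *m X = X, (A *m X)^T = A *m X & (X *m A)^T = X *m A].

Definition mp_pinv (R : realFieldType) (n : nat) (A : 'M[R]_n) : 'M[R]_n :=
  epsilon (inhabits 0) (penrose A).

Definition eff_res (R : realFieldType) (n : nat) (L : 'M[R]_n) (u v : 'I_n) : R :=
  let b : 'cV[R]_n := \col_i ((i == u)%:R - (i == v)%:R) in
  (b^T *m mp_pinv L *m b) 0 0.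

Definition psd (R : realFieldType) (n : nat) (A : 'M[R]_n) : Prop :=
  forall x : 'cV[R]_n, 0 <= (x^T *m A *m x) 0 0.

Definition pos_adj (R : realFieldType) (n m : nat) (src dst : 'I_m -> 'I_n) (w : 'I_m -> R)
  : rel 'I_n :=
  fun x y => [exists e, (0 < w e) && edge_is src dst e x y].

Definition pos_path_uses (R : realFieldType) (n m : nat) (src dst : 'I_m -> 'I_n)
  (w : 'I_m -> R) (u v : 'I_n) (e : 'I_m) : Prop :=
  exists s : seq 'I_n,
    [&& path (pos_adj src dst w) u s, last u s == v, uniq (u :: s)
      & has (fun xy => edge_is src dst e xy.1 xy.2) (zip (u :: s) s)].

Definition Pset (R : realFieldType) (n m : nat) (src dst : 'I_m -> 'I_n) (w : 'I_m -> R)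
  (k : 'I_m) : 'I_m -> Prop :=
  fun e => 0 < w e /\ pos_path_uses src dst w (src k) (dst k) e.

(* Main.v *)
Require Import Defs.
From HB Require Import structures.
From mathcomp Require Import all_boot all_order all_algebra ring lra.
From Stdlib Require Import ClassicalEpsilon.
Set Implicit Arguments. Unset Strict Implicit. Unset Printing Implicit Defensive.
Import Order.TTheory GRing.Theory Num.Theory.
Local Open Scope ring_scope.

Section S.
Variables (R : realFieldType) (n m : nat) (src dst : 'I_m -> 'I_n).
Local Notation E := (incidence R src dst).

Definition dd (x : 'cV[R]_n) (e : 'I_m) := x (src e) 0 - x (dst e) 0.

Lemma sum_delta (s : 'I_n) (f : 'I_n -> R) :
  \sum_i (i == s)%:R * f i = f s.
Proof.
rewrite (bigD1 s) //= eqxx mul1r big1 ?addr0 // => i /negbTE ->; by rewrite mul0r.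
Qed.

Lemma sum_delta1 (s : 'I_n) : \sum_i (i == s)%:R = 1 :> R.
Proof. by rewrite -[RHS](sum_delta s (fun _ => 1)); apply: eq_bigr => i _; rewrite mulr1. Qed.

Lemma trE_col (y : 'cV[R]_n) e : (E^T *m y) e 0 = dd y e.
Proof.
rewrite mxE.
under eq_bigr => i _ do rewrite !mxE mulrBl.
by rewrite sumrB !sum_delta.
Qed.

Lemma rowE (x : 'cV[R]_n) e : (x^T *m E) 0 e = dd x e.
Proof.
rewrite mxE.
under eq_bigr => i _ do rewrite !mxE mulrBr [x i 0 * _]mulrC [x i 0 * (_ == dst e)%:R]mulrC.
by rewrite sumrB !sum_delta.
Qed.

Lemma bil (w : 'I_m -> R) x y :
  (x^T *m laplacian src dst w *m y) 0 0 = \sum_e w e * dd x e * dd y e.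
Proof.
rewrite /laplacian !mulmxA -mulmxA mxE.
apply: eq_bigr => e _.
by rewrite mul_mx_diag mxE rowE trE_col mxE [dd x e * _]mulrC.
Qed.

Lemma lapE (w : 'I_m -> R) y z :
  (laplacian src dst w *m y) z 0 = \sum_e E z e * w e * dd y e.
Proof.
rewrite /laplacian -mulmxA mxE.
apply: eq_bigr => e _.
by rewrite mul_mx_diag mxE trE_col !mxE.
Qed.

Lemma lap_tr (w : 'I_m -> R) : (laplacian src dst w)^T = laplacian src dst w.
Proof.
by rewrite /laplacian !trmx_mul trmxK tr_diag_mx mulmxA.
Qed.

Lemma quad (w : 'I_m -> R) x :
  (x^T *m laplacian src dst w *m x) 0 0 = \sum_e w e * dd x e ^+ 2.
Proof. by rewrite bil; apply: eq_bigr => e _; rewrite expr2 mulrA. Qed.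

End S.

Section P.
Variables (R : realFieldType) (n : nat).

Lemma inj_unit (A : 'M[R]_n) :
  (forall x : 'cV_n, A *m x = 0 -> x = 0) -> A \in unitmx.
Proof.
move=> H; rewrite -unitmx_tr -row_free_unit -kermx_eq0.
set K := kermx A^T.
have HK : (K *m A^T)^T = 0 by rewrite mulmx_ker trmx0.
rewrite trmx_mul trmxK in HK. clearbody K.
apply/eqP/matrixP => i j.
have := H (col i K^T).
rewrite colE mulmxA HK mul0mx -colE => /(_ erefl) /matrixP /(_ j 0).
by rewrite !mxE.
Qed.

Lemma penrose_J (A J M : 'M[R]_n) (c : R) :
  M = A + c *: J -> M \in unitmx -> A *m J = 0 -> J *m A = 0 ->
  c *: (J *m J) = J -> A^T = A -> J^T = J ->
  penrose A (invmx M - c *: J).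
Proof.
move=> defM uM AJ JA JJ At Jt.
have JM : J *m M = J by rewrite defM mulmxDr JA add0r -scalemxAr.
have MJ : M *m J = J by rewrite defM mulmxDl AJ add0r -scalemxAl.
have JMi : J *m invmx M = J by rewrite -{1}JM mulmxK.
have MiJ : invmx M *m J = J by rewrite -{1}MJ mulKmx.
have defA : A = M - c *: J by rewrite defM addrK.
have AX : A *m (invmx M - c *: J) = 1%:M - c *: J.
  rewrite mulmxBr -scalemxAr AJ scaler0 subr0 defA mulmxBl mulmxV //.
  by rewrite -scalemxAl JMi.
have XA : (invmx M - c *: J) *m A = 1%:M - c *: J.
  rewrite mulmxBl -scalemxAl JA scaler0 subr0 defA mulmxBr mulVmx //.
  by rewrite -scalemxAr MiJ.
have JX : J *m (invmx M - c *: J) = 0.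
  by rewrite mulmxBr JMi -scalemxAr JJ subrr.
split.
- by rewrite AX mulmxBl mul1mx -scalemxAl JA scaler0 subr0.
- by rewrite XA mulmxBl mul1mx -scalemxAl JX scaler0 subr0.
- by rewrite AX linearB /= trmx1 linearZ /= Jt.
- by rewrite XA linearB /= trmx1 linearZ /= Jt.
Qed.

End P.

Section G.
Variables (R : realFieldType) (n m : nat) (src dst : 'I_m -> 'I_n) (w : 'I_m -> R).
Hypothesis Hloop : forall e, src e != dst e.
Hypothesis Hconn : forall u v, connect (pos_adj src dst w) u v.
Variable n0 : 'I_n.
Local Notation wp := (pos_part w).
Local Notation Lp := (laplacian src dst (pos_part w)).
Local Notation E := (incidence R src dst).
Local Notation adj := (pos_adj src dst w).

Lemma wp_ge0 e : 0 <= wp e.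
Proof. by rewrite /pos_part; case: ifP => // /ltW. Qed.
Lemma wp_pos e : 0 < w e -> wp e = w e.
Proof. by rewrite /pos_part => ->. Qed.
Lemma wp_npos e : ~~ (0 < w e) -> wp e = 0.
Proof. by rewrite /pos_part => /negbTE ->. Qed.

Lemma edge_sym e x y : edge_is src dst e x y = edge_is src dst e y x.
Proof. by rewrite /edge_is orbC. Qed.

Lemma adj_sym x y : adj x y = adj y x.
Proof. by rewrite /pos_adj; apply: eq_existsb => e; rewrite edge_sym. Qed.

Lemma connect_eq (f : 'I_n -> R) :
  (forall x y, adj x y -> f x = f y) -> forall a c, f a = f c.
Proof.
move=> H a c; move/connectP: (Hconn a c) => [p pth ->].
elim: p a pth => //= b p IH a /andP [rab /IH <-]; exact: H.
Qed.

Lemma ker_const (z : 'cV[R]_n) : Lp *m z = 0 -> forall a c, z a 0 = z c 0.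
Proof.
move=> Hz.
have Q0 : \sum_e wp e * dd src dst z e ^+ 2 = 0.
  by rewrite -quad -mulmxA Hz mulmx0 mxE.
apply: connect_eq => x y /existsP [e /andP [pe ex]].
have := psumr_eq0P (P:=xpredT) (fun e _ => mulr_ge0 (wp_ge0 e) (sqr_ge0 _)) Q0 (i:=e) isT.
rewrite wp_pos // => /eqP; rewrite mulf_eq0 (gt_eqF pe) /= sqrf_eq0 subr_eq0 => /eqP.
by move: ex; rewrite /edge_is => /orP [] /andP [/eqP <- /eqP <-].
Qed.

Lemma LJ p : Lp *m (const_mx 1 : 'M_(n, p)) = 0.
Proof.
apply/matrixP=> i j.
transitivity ((Lp *m (const_mx 1 : 'cV_n)) i 0).
  by rewrite !mxE; apply: eq_bigr => k _; rewrite !mxE.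
rewrite lapE big1 ?mxE // => e _; by rewrite /dd !mxE subrr mulr0.
Qed.

Lemma JL p : (const_mx 1 : 'M_(p, n)) *m Lp = 0.
Proof.
by rewrite -[Lp]lap_tr -(trmx_const _ _ 1) -trmx_mul LJ trmx0.
Qed.

Lemma sum_row (z : 'cV[R]_n) i : ((const_mx 1 : 'M_(1, n)) *m z) i 0 = \sum_k z k 0.
Proof. by rewrite mxE; apply: eq_bigr => k _; rewrite mxE mul1r. Qed.

Lemma exists_pinv : exists X, penrose Lp X.
Proof.
set J := (const_mx 1 : 'M[R]_n).
set c := (n%:R : R)^-1.
have nz : (n%:R : R) != 0 by rewrite pnatr_eq0 -lt0n (leq_trans _ (ltn_ord n0)).
have JJ : c *: (J *m J) = J.
  apply/matrixP => i j; rewrite !mxE.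
  under eq_bigr do rewrite !mxE mulr1.
  by rewrite sumr_const card_ord -mulr_natr mul1r mulVf.
exists (invmx (Lp + c *: J) - c *: J).
apply: (penrose_J (J:=J) (c:=c)) => //; last by rewrite trmx_const.
- apply: inj_unit => x Mx.
  have JM : J *m (Lp + c *: J) = J by rewrite mulmxDr JL add0r -scalemxAr.
  have Jx : J *m x = 0 by rewrite -JM -mulmxA Mx mulmx0.
  have Lx : Lp *m x = 0.
    by move: Mx; rewrite mulmxDl -scalemxAl Jx scaler0 addr0.
  have xc := ker_const Lx.
  have x0 : x n0 0 = 0.
    have /matrixP/(_ n0 0) := Jx.
    rewrite mxE (eq_bigr (fun _ => x n0 0)); last by move=> k _; rewrite mxE mul1r (xc k n0).
    rewrite sumr_const card_ord mxE => /eqP; rewrite -mulr_natr mulf_eq0 (negbTE nz) orbF.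
    by move/eqP.
  by apply/matrixP => i j; rewrite (ord1 j) mxE (xc i n0) x0.
- exact: LJ.
- exact: JL.
- exact: lap_tr.
Qed.

Lemma pinv_ok : penrose Lp (mp_pinv Lp).
Proof. exact: epsilon_spec exists_pinv. Qed.

Definition bv (u v : 'I_n) : 'cV[R]_n := \col_i ((i == u)%:R - (i == v)%:R).

Lemma bx u v (x : 'cV[R]_n) : ((bv u v)^T *m x) 0 0 = x u 0 - x v 0.
Proof.
rewrite mxE.
under eq_bigr => i _ do rewrite !mxE mulrBl.
by rewrite sumrB !sum_delta.
Qed.

Lemma Ly u v : Lp *m (mp_pinv Lp *m bv u v) = bv u v.
Proof.
have [h1 _ h3 _] := pinv_ok.
set X := mp_pinv Lp in h1 h3 *.
have LP : Lp *m (Lp *m X) = Lp.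
  have gen : forall A Y : 'M[R]_n, A^T = A -> A *m Y *m A = A ->
      (A *m Y)^T = A *m Y -> A *m (A *m Y) = A.
    move=> A Y At e1 e3.
    by rewrite -{1}At -e3 -trmx_mul e1 At.
  exact: gen (lap_tr _ _ _) h1 h3.
set z := bv u v - Lp *m X *m bv u v.
have Lz : Lp *m z = 0 by rewrite /z mulmxBr mulmxA LP subrr.
have zc := ker_const Lz.
have zdef : z = bv u v - Lp *m X *m bv u v by [].
clearbody z.
have sz : (const_mx 1 : 'M_(1, n)) *m z = 0.
  rewrite zdef mulmxBr (mulmxA (const_mx 1) (Lp *m X)) (mulmxA (const_mx 1) Lp) JL !mul0mx subr0.
  apply/matrixP => i j; rewrite (ord1 j) sum_row mxE.
  under eq_bigr do rewrite mxE.
  by rewrite sumrB !sum_delta1 subrr.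
have z0 : z n0 0 = 0.
  have /matrixP/(_ 0 0) := sz.
  rewrite sum_row (eq_bigr (fun _ => z n0 0)); last by move=> k _; rewrite (zc k n0).
  rewrite sumr_const card_ord mxE => /eqP; rewrite -mulr_natr mulf_eq0 orbC.
  by rewrite pnatr_eq0 eqn0Ngt (leq_ltn_trans (leq0n _) (ltn_ord n0)) => /eqP.
have -> : Lp *m (X *m bv u v) = bv u v - z by rewrite zdef opprB addrC subrK mulmxA.
apply/matrixP => i j; rewrite (ord1 j) !mxE (zc i n0) z0 subr0 //.
Qed.

Definition yv u v := mp_pinv Lp *m bv u v.

Lemma keyK u v (x : 'cV[R]_n) :
  x u 0 - x v 0 = \sum_e wp e * dd src dst (yv u v) e * dd src dst x e.
Proof.
rewrite -bil -bx; congr (_ 0 0).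
by rewrite -[in RHS](lap_tr src dst wp) -trmx_mul Ly.
Qed.

Lemma effE u v : eff_res Lp u v = yv u v u 0 - yv u v v 0.
Proof.
rewrite /eff_res /=; rewrite -mulmxA.
exact: (bx u v (yv u v)).
Qed.

Lemma cons u v a :
  \sum_e E a e * wp e * dd src dst (yv u v) e = (a == u)%:R - (a == v)%:R.
Proof. by rewrite -lapE Ly mxE. Qed.

Lemma step (f : 'I_n -> R) a c :
  \sum_e E a e * wp e * (f (src e) - f (dst e)) <= 0 -> adj a c -> f c < f a ->
  exists a', adj a' a && (f a < f a').
Proof.
move=> Hs /existsP [e0 /andP [pe0 ee0]] fca.
set t := fun g => E a g * wp g * (f (src g) - f (dst g)).
have ac : a != c by apply: contraTneq fca => ->; rewrite ltxx.
have t0 : 0 < t e0.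
  rewrite /t mxE wp_pos //.
  move: ee0; rewrite /edge_is => /orP [] /andP [/eqP -> /eqP ->].
  - rewrite eqxx (negbTE ac) subr0 mul1r; apply: mulr_gt0 => //; by rewrite subr_gt0.
  - rewrite eqxx (negbTE ac) sub0r mulN1r mulNr -mulrN opprB.
    by apply: mulr_gt0 => //; rewrite subr_gt0.
case: (pickP (fun g => t g < 0)) => [g tg|none]; last first.
  exfalso.
  have : 0 < \sum_g t g.
    apply: (lt_le_trans t0); rewrite (bigD1 e0) //= lerDl.
    by apply: sumr_ge0 => g _; rewrite leNgt none.
  by move=> /lt_le_trans /(_ Hs); rewrite ltxx.
move: tg; rewrite /t mxE.
case: (eqVneq a (src g)) => [-> | ns].
  rewrite (negbTE (Hloop g)) subr0 mul1r => tg.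
  have pg : 0 < w g.
    by move: tg; rewrite /pos_part; case: ifP => //; rewrite mul0r ltxx.
  exists (dst g); apply/andP; split.
    by apply/existsP; exists g; rewrite pg /edge_is !eqxx orbT.
  by move: tg; rewrite wp_pos // pmulr_rlt0 // subr_lt0.
case: (eqVneq a (dst g)) => [-> | nd].
  rewrite sub0r mulN1r => tg.
  have pg : 0 < w g.
    by move: tg; rewrite /pos_part; case: ifP => //; rewrite oppr0 mul0r ltxx.
  exists (src g); apply/andP; split.
    by apply/existsP; exists g; rewrite pg /edge_is !eqxx.
  by move: tg; rewrite wp_pos // mulNr oppr_lt0 pmulr_rgt0 // subr_gt0.
by rewrite subrr !mul0r ltxx.
Qed.

Section Walk.
Variables u v : 'I_n.
Local Notation f := (fun k => yv u v k 0).
Definition rr := fun x z => adj x z && (f z < f x).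

Lemma up a : (a = u \/ exists c, adj a c && (f c < f a)) ->
  exists s, path rr u s && (last u s == a).
Proof.
suff H : forall N a, (#|[set z | (f a < f z)%R]| < N)%N ->
    (a = u \/ exists c, adj a c && (f c < f a)) ->
    exists s, path rr u s && (last u s == a).
  exact: H.
elim=> [//|N IH] {}a Hc Ha.
case: (eqVneq a u) => [-> | nau]; first by exists [::]; rewrite /= eqxx.
case: Ha => [aeq | [c /andP [ac fca]]]; first by rewrite aeq eqxx in nau.
have Hs : \sum_e E a e * wp e * (f (src e) - f (dst e)) <= 0.
  have := cons u v a; rewrite /dd => ->.
  by rewrite (negbTE nau) sub0r oppr_le0 ler0n.
have [a' /andP [a'a faa']] := step (f := f) Hs ac fca.
have Hc' : (#|[set z | (f a' < f z)%R]| < N)%N.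
  rewrite ltnS in Hc; apply: leq_trans Hc; apply: proper_card.
  apply/properP; split.
    by apply/subsetP => z; rewrite !inE => /(lt_trans faa').
  by exists a'; rewrite !inE ?ltxx.
have [s' /andP [ps' ls']] := IH a' Hc' (or_intror (ex_intro _ a (introT andP (conj a'a faa')))).
exists (rcons s' a); rewrite rcons_path last_rcons eqxx andbT ps' (eqP ls') /=.
by rewrite /rr a'a faa'.
Qed.

Lemma down c : (c = v \/ exists a, adj a c && (f c < f a)) ->
  exists s, path rr c s && (last c s == v).
Proof.
suff H : forall N c, (#|[set z | (f z < f c)%R]| < N)%N ->
    (c = v \/ exists a, adj a c && (f c < f a)) ->
    exists s, path rr c s && (last c s == v).
  exact: H.
elim=> [//|N IH] {}c Hc Ha.
case: (eqVneq c v) => [-> | ncv]; first by exists [::]; rewrite /= eqxx.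
case: Ha => [ceq | [a /andP [ac fca]]]; first by rewrite ceq eqxx in ncv.
have Hs : \sum_e E c e * wp e * ((fun k => - f k) (src e) - (fun k => - f k) (dst e)) <= 0.
  have := cons u v c; rewrite /dd => Hc0.
  rewrite (eq_bigr (fun e => - (E c e * wp e * (yv u v (src e) 0 - yv u v (dst e) 0)))); last first.
    by move=> e _; rewrite opprK addrC -opprB mulrN.
  by rewrite sumrN Hc0 (negbTE ncv) subr0 oppr_le0 ler0n.
have ca : adj c a by rewrite adj_sym.
have fac : (fun k => - f k) a < (fun k => - f k) c by rewrite /= ltrN2.
have [c' /andP [c'c fcc']] := step (f := fun k => - f k) Hs ca fac.
rewrite ltrN2 in fcc'.
have Hc' : (#|[set z | (f z < f c')%R]| < N)%N.
  rewrite ltnS in Hc; apply: leq_trans Hc; apply: proper_card.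
  apply/properP; split.
    by apply/subsetP => z; rewrite !inE => /lt_trans; apply.
  by exists c'; rewrite !inE ?ltxx.
have cc' : adj c c' by rewrite adj_sym.
have [s' /andP [ps' ls']] := IH c' Hc' (or_intror (ex_intro _ c (introT andP (conj cc' fcc')))).
exists (c' :: s'); rewrite /= ps' ls' andbT.
by rewrite /rr cc' fcc'.
Qed.

End Walk.

Lemma zip_cat_cons (T : Type) (x : T) s1 t :
  zip (x :: s1 ++ t) (s1 ++ t) = zip (x :: s1) s1 ++ zip (last x s1 :: t) t.
Proof. by elim: s1 x => //= y s1 IH x; rewrite IH. Qed.

Lemma core u v e : 0 < w e -> dd src dst (yv u v) e != 0 ->
  pos_path_uses src dst w u v e.
Proof.
move=> pe; rewrite /dd subr_eq0 => ne.
set f := fun k => yv u v k 0.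
have [a [c [eac fca]]] : exists a c, edge_is src dst e a c /\ f c < f a.
  case: (ltgtP (f (src e)) (f (dst e))) => h.
  - by exists (dst e), (src e); rewrite /edge_is !eqxx orbT.
  - by exists (src e), (dst e); rewrite /edge_is !eqxx.
  - by move: ne; rewrite -/(f (src e)) -/(f (dst e)) h eqxx.
have aac : adj a c by apply/existsP; exists e; rewrite pe eac.
have [s1 /andP [p1 l1]] := up (or_intror (ex_intro _ c (introT andP (conj aac fca)))).
have [s2 /andP [p2 l2]] := down (or_intror (ex_intro _ a (introT andP (conj aac fca)))).
exists (s1 ++ c :: s2).
have P : path (rr u v) u (s1 ++ c :: s2).
  by rewrite cat_path p1 (eqP l1) /= {1}/rr aac fca p2.
apply/and4P; split.
- by apply: sub_path P => x z /andP [].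
- by rewrite last_cat (eqP l1) /=.
- have : path (fun p q => q < p) (f u) (map f (s1 ++ c :: s2)).
    by rewrite path_map; apply: sub_path P => x z /andP [].
  move=> Pm.
  apply: (@map_uniq _ _ f).
  have tr : transitive (fun p q : R => q < p).
    by move=> b x z hxb hbz; exact: lt_trans hbz hxb.
  have ir : irreflexive (fun p q : R => q < p) by move=> x; rewrite /= ltxx.
  by move: (sorted_uniq tr ir (s := f u :: [seq f i | i <- s1 ++ c :: s2])) => /= ->.
- by rewrite zip_cat_cons has_cat (eqP l1) /= eac orbT.
Qed.

End G.

Section CS.
Variable R : realFieldType.

Lemma cs (I : finType) (P : pred I) (p a c : I -> R) : (forall i, 0 <= p i) ->
  (\sum_(i | P i) p i * a i * c i) ^+ 2 <=
  (\sum_(i | P i) p i * a i ^+ 2) * (\sum_(i | P i) p i * c i ^+ 2).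
Proof.
move=> p0.
have A0 : 0 <= \sum_(i | P i) p i * a i ^+ 2.
  by apply: sumr_ge0 => i _; apply: mulr_ge0 => //; apply: sqr_ge0.
case: (eqVneq (\sum_(i | P i) p i * a i ^+ 2) 0) => [Az | Anz].
  have pa : forall i, P i -> p i * a i = 0.
    move=> i Pi.
    have := psumr_eq0P (fun i _ => mulr_ge0 (p0 i) (sqr_ge0 (a i))) Az Pi.
    move/eqP; rewrite mulf_eq0 sqrf_eq0 => /orP [] /eqP ->; by rewrite ?mul0r ?mulr0.
  rewrite Az mul0r big1 ?expr0n // => i Pi; by rewrite pa // mul0r.
have Ap : 0 < \sum_(i | P i) p i * a i ^+ 2 by rewrite lt_neqAle eq_sym Anz A0.
move: Ap A0 Anz.
set A := \sum_(i | P i) p i * a i ^+ 2.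
set B := \sum_(i | P i) p i * a i * c i.
set C := \sum_(i | P i) p i * c i ^+ 2.
move=> Ap _ _.
have S0 : 0 <= \sum_(i | P i) p i * (B * a i - A * c i) ^+ 2.
  by apply: sumr_ge0 => i _; apply: mulr_ge0 => //; apply: sqr_ge0.
have ES : \sum_(i | P i) p i * (B * a i - A * c i) ^+ 2 =
    B ^+ 2 * A - 2%:R * A * B * B + A ^+ 2 * C.
  transitivity (\sum_(i | P i) (B ^+ 2 * (p i * a i ^+ 2) - (2%:R * A * B) * (p i * a i * c i)
      + A ^+ 2 * (p i * c i ^+ 2))).
    by apply: eq_bigr => i _; ring.
  by rewrite big_split sumrB /= -!mulr_sumr.
rewrite ES in S0.
nra.
Qed.

Lemma path_const (T : eqType) (r : rel T) (g : T -> R) x t : path r x t ->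
  (forall q, q \in zip (x :: t) t -> r q.1 q.2 -> g q.1 = g q.2) ->
  g x = g (last x t).
Proof.
elim: t x => //= z t IH x /andP [rxz pt] H.
rewrite (H (x, z)) ?mem_head //; apply: IH => // q qin; apply: H.
by rewrite in_cons qin orbT.
Qed.

End CS.

Unset Implicit Arguments.
Theorem theorem3 (R : realFieldType) (n m : nat)
  (src dst : 'I_m -> 'I_n) (w : 'I_m -> R)
  (* simple undirected graph with nonzero weights *)
  (Hloop : forall e, src e != dst e)
  (Hsimple : forall e f x y, edge_is src dst e x y -> edge_is src dst f x y -> e = f)
  (Hw0 : forall e, w e != 0)
  (* more than one negative edge *)
  (Hneg : (1 < #|[set k | (w k < 0)%R]|)%N)
  (* G_+ connected *)
  (Hconn : forall u v : 'I_n, connect (pos_adj src dst w) u v)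
  (* the sets P_k are pairwise disjoint *)
  (Hdisj : forall i j e, w i < 0 -> w j < 0 -> i != j ->
      Pset src dst w i e -> Pset src dst w j e -> False) :
  psd (laplacian src dst w) <->
  (forall k, w k < 0 ->
     `|w k| <= (eff_res (laplacian src dst (pos_part w)) (src k) (dst k))^-1).
Proof.
have ngt0 : (0 < n)%N.
  have : (0 < #|[set k | (w k < 0)%R]|)%N by apply: leq_trans Hneg.
  by case/card_gt0P => k0 _; exact: leq_ltn_trans (leq0n _) (ltn_ord (src k0)).
pose n0 := Ordinal ngt0.
pose y k := yv src dst w (src k) (dst k).
pose Rk k := eff_res (laplacian src dst (pos_part w)) (src k) (dst k).
have RkE k : Rk k = dd src dst (y k) k by rewrite /Rk effE.
have Rsum k : Rk k = \sum_e pos_part w e * dd src dst (y k) e ^+ 2.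
  rewrite RkE /dd (keyK Hconn n0); apply: eq_bigr => e _; by rewrite expr2 mulrA.
have Rpos k : 0 < Rk k.
  have R0 : 0 <= Rk k.
    by rewrite Rsum; apply: sumr_ge0 => e _; apply: mulr_ge0 (wp_ge0 _ _) (sqr_ge0 _).
  rewrite lt_neqAle R0 andbT eq_sym; apply/eqP => Rz.
  have t0 : forall e, pos_part w e * dd src dst (y k) e = 0.
    move=> e; have := psumr_eq0P (P := xpredT)
      (fun e _ => mulr_ge0 (wp_ge0 w e) (sqr_ge0 (dd src dst (y k) e))) (etrans (esym (Rsum k)) Rz) (i := e) isT.
    move/eqP; rewrite mulf_eq0 sqrf_eq0 => /orP [] /eqP ->; by rewrite ?mul0r ?mulr0.
  have := keyK Hconn n0 (src k) (dst k) (\col_i (i == src k)%:R).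
  rewrite !mxE eqxx eq_sym (negbTE (Hloop k)) subr0 big1; last by move=> e _; rewrite t0 mul0r.
  by move/eqP; rewrite oner_eq0.
have zero j k : w j < 0 -> w k < 0 -> j != k -> dd src dst (y k) j = 0.
  move=> nj nk jk.
  move/connectP: (Hconn (src j) (dst j)) => [p pth lp].
  move: lp; case: (shortenP pth) => s' ps' us' _ lp.
  rewrite /dd lp; apply/eqP; rewrite subr_eq0; apply/eqP.
  apply: (path_const (g := fun z => y k z 0) ps') => q qin /existsP [f /andP [pf ef]].
  have Pj : Pset src dst w j f.
    split => //; exists s'; rewrite ps' -lp eqxx us' /=.
    by apply/hasP; exists q.
  have : dd src dst (y k) f = 0.
    apply/eqP; apply: contraT => nf.
    case: (Hdisj j k f nj nk jk Pj (conj pf (core Hloop Hconn n0 pf nf))).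
  move/eqP; rewrite /dd subr_eq0 => /eqP.
  by move: ef; rewrite /edge_is => /orP [] /andP [/eqP <- /eqP <-].
split.
- move=> H k nk.
  have Q := H (y k); rewrite quad in Q.
  have E1 : \sum_e w e * dd src dst (y k) e ^+ 2 = w k * Rk k ^+ 2 + Rk k.
    rewrite (bigD1 k) //= RkE; congr (_ + _).
    rewrite -RkE Rsum [in RHS](bigD1 k) //= wp_npos ?mul0r ?add0r; last by rewrite -leNgt ltW.
    apply: eq_bigr => e ek.
    case: (boolP (0 < w e)) => pe; first by rewrite wp_pos.
    rewrite wp_npos // zero ?expr0n ?mulr0 //.
    by rewrite lt_neqAle Hw0 /= leNgt.
  rewrite E1 in Q.
  have Rp := Rpos k.
  rewrite -/(Rk k) (ler0_norm (ltW nk)) -div1r ler_pdivlMr //.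
  nra.
- move=> H x; rewrite quad.
  pose t e := pos_part w e * dd src dst x e ^+ 2.
  have t0 e : 0 <= t e by apply: mulr_ge0 (wp_ge0 _ _) (sqr_ge0 _).
  pose S k e := dd src dst (y k) e != 0.
  pose T k := \sum_(e | S k e) t e.
  have StepA k : w k < 0 -> - w k * dd src dst x k ^+ 2 <= T k.
    move=> nk.
    have Hk := H k nk; rewrite -/(Rk k) (ler0_norm (ltW nk)) -div1r ler_pdivlMr ?Rpos // in Hk.
    have ddx : dd src dst x k = \sum_(e | S k e) pos_part w e * dd src dst (y k) e * dd src dst x e.
      rewrite /dd (keyK Hconn n0) [in RHS]big_mkcond /=; apply: eq_bigr => e _.
      rewrite /S; case: ifP => //; move/negbFE/eqP => h; by rewrite -/(y k) h mulr0 mul0r.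
    have RS : Rk k = \sum_(e | S k e) pos_part w e * dd src dst (y k) e ^+ 2.
      rewrite Rsum [in RHS]big_mkcond /=; apply: eq_bigr => e _.
      rewrite /S; case: ifP => //; move/negbFE/eqP => h; by rewrite -/(y k) h expr0n mulr0.
    have C := @cs R _ (S k) (pos_part w) (fun e => dd src dst (y k) e) (fun e => dd src dst x e) (wp_ge0 w).
    rewrite -ddx -RS -/(T k) in C.
    have T0 : 0 <= T k by apply: sumr_ge0.
    have Rp := Rpos k.
    nra.
  have StepB : \sum_(k | w k < 0) T k <= \sum_e t e.
    rewrite /T (exchange_big_dep xpredT) //=.
    apply: ler_sum => e _.
    case: (boolP (0 < w e)) => pe; last first.
      rewrite big1 ?t0 // => k _; by rewrite /t wp_npos ?mul0r.
    case: (pickP (fun k => (w k < 0) && S k e)) => [k0 /andP [nk0 Sk0] | none]; last first.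
      by rewrite big_pred0 ?t0 // => k; rewrite none.
    rewrite (bigD1 k0) ?nk0 ?Sk0 //= big1 ?addr0 // => k /andP [/andP [nk Sk] kk0].
    exfalso; apply: (Hdisj k k0 e nk nk0 kk0).
      exact: (conj pe (core Hloop Hconn n0 pe Sk)).
    exact: (conj pe (core Hloop Hconn n0 pe Sk0)).
  have StepC : \sum_e w e * dd src dst x e ^+ 2 =
      \sum_e t e + \sum_(k | w k < 0) w k * dd src dst x k ^+ 2.
    rewrite [in RHS](big_mkcond (fun k => w k < 0)) -big_split /=.
    apply: eq_bigr => e _; rewrite /t.
    case: (boolP (0 < w e)) => pe.
      by rewrite wp_pos // ifN ?addr0 // -leNgt ltW.
    rewrite wp_npos // mul0r add0r ifT //.
    by rewrite lt_neqAle Hw0 /= leNgt.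
  have StepD : 0 <= \sum_(k | w k < 0) (w k * dd src dst x k ^+ 2 + T k).
    by apply: sumr_ge0 => k nk; have := StepA k nk; lra.
  rewrite big_split /= in StepD.
  rewrite StepC; lra.
Qed.
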